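(* Let $m\ge2$, $n\ge0$, $0\le k\le n$, input $\rho=|\vec n_0\rangle\langle\vec n_0|$ with $N_0=N(\vec n_0)$. For $\vec\alpha\in\mathbb C^m$ and $g\in\mathrm{SU}(m)$, the heterodyne filter function $$f_{\lambda_k}(\vec\alpha,g):=\frac{1}{s_{\lambda_k}}\langle\vec\alpha|\,\tau^m(g)\,[P_{\lambda_k}(\rho)]\,\tau^m(g)^\dagger\,|\vec\alpha\rangle$$ is given by $$f_{\lambda_k}(\vec\alpha,g)=\frac{(-1)^{\varphi(N_0)}}{s_{\lambda_k}}\sum_{M\in\mathrm{GT}(\lambda_k)}C^{M}_{N_0,\bar N_0}\sum_{N'\in\mathrm{GT}(\tau_n^m)}(-1)^{\varphi(N')}C^{M}_{N',\bar N'}\,\big|\langle\vec\alpha|\tau_n^m(g)|\vec n'\rangle\big|^2,$$ where $|\vec n'\rangle=|N'\rangle$ and $s_{\lambda_k}$ is the heterodyne frame-operator eigenvalue.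
   Context: Fix integers $m\ge 2$, $n\ge0$. $\mathcal H_n^m$ is the span of Fock states $|\vec n\rangle=|n_1,\dots,n_m\rangle$, $\vec n\in\mathbb N^m$, $\sum_in_i=n$. $\tau^m$ denotes the unitary action of $\mathrm{SU}(m)$ by passive transformations on the full $m$-mode Fock space, whose restriction to $\mathcal H_n^m$ is the totally symmetric irrep $\tau_n^m$; $\bar\tau_n^m$ is its complex conjugate in the Fock basis; $\omega_n^m(g)(X)=\tau_n^m(g)X\tau_n^m(g)^\dagger\cong\tau_n^m\otimes\bar\tau_n^m$. $\lambda_k$ is the irrep with Young diagram $(2k,k,\dots,k,0)$ (first row $2k$ boxes, rows $2,\dots,m-1$ with $k$ boxes, empty last row), $d_{\lambda_k}$ its dimension; $\tau_n^m\otimes\bar\tau_n^m\cong\bigoplus_{k=0}^n\lambda_k$ multiplicity-free, and $P_{\lambda_k}$ is the orthogonal (Hilbert–Schmidt) projector onto the $\lambda_k$ component of $\mathcal B(\mathcal H_n^m)$. Gelfand–Tsetlin (GT) patterns: for an irrep $\lambda=(\lambda_1,\dots,\lambda_m)$, $\lambda_m=0$, a GT pattern $M=(M_{i,j})_{1\le i\le j\le m}$ has $M_{i,m}=\lambda_i$ and $M_{i,j+1}\ge M_{i,j}\ge M_{i+1,j+1}$; $\mathrm{GT}(\lambda)$ is the set of such patterns and $\{|M\rangle\}$ the orthonormal GT basis (Condon–Shortley convention). The Fock state $|\vec n\rangle$ is identified with the GT basis vector $|N\rangle$ of $\tau_n^m$ with $N_{1,j}=n_1+\dots+n_j$, $N_{i,j}=0$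 for $i\ge2$; write $N=N(\vec n)$. The dual pattern is $\bar M_{i,l}:=M_{1,m}-M_{l-i+1,l}$. With $s_M(k)=\sum_{j=1}^k\sum_{i=1}^jM_{i,j}$ and $M_{\max}$ the highest-weight pattern, $\varphi(M):=s_M(m-1)-s_{M_{\max}}(m-1)\in\mathbb Z$, so that $|N\rangle=(-1)^{\varphi(N)}|\bar N\rangle$ when the Fock vector is regarded as a basis vector of $\bar\tau_n^m$. Real Clebsch–Gordan coefficients: $C^M_{N_1,\bar N_2}:=\langle N_1,\bar N_2|M\rangle$ for $N_1,N_2\in\mathrm{GT}(\tau_n^m)$, $M\in\mathrm{GT}(\lambda_k)$, with $|N_1\rangle\otimes|\bar N_2\rangle=\sum_k\sum_{M\in\mathrm{GT}(\lambda_k)}C^M_{N_1,\bar N_2}|M\rangle$. Coherent states: for $\vec\alpha\in\mathbb C^m$, $|\vec\alpha\rangle=e^{-|\vec\alpha|^2/2}\sum_{\vec n\in\mathbb N^m}\frac{\vec\alpha^{\vec n}}{\sqrt{\vec n!}}|\vec n\rangle$. Heterodyne frame-operator eigenvalue: $s_{\lambda_k}:=d_{\lambda_k}^{-1}\int_{\mathbb C^m}d^2\vec\alpha\,\langle\vec\alpha|P_{\lambda_k}(|\vec\alpha\rangle\langle\vec\alpha|)|\vec\alpha\rangle$ (with $P_{\lambda_k}$ applied after compressing to $\mathcal H_n^m$), assumed nonzero. *)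

(* Defs.v *)
From mathcomp Require Import all_boot all_algebra.
From mathcomp Require Import all_classical all_reals all_analysis.
From mathcomp Require Export complex.
Set Implicit Arguments. Unset Strict Implicit. Unset Printing Implicit Defensive.
Import GRing.Theory Num.Theory.
Local Open Scope ring_scope.
Local Open Scope complex_scope.

Section Defs.
Variable R : realType.
Local Notation C := R[i].
Variable m : nat.

Definition occ := {ffun 'I_m -> nat}.
(* basis of H_n^m: occupation vectors with total photon number n *)
Definition fockb (n : nat) := {f : {ffun 'I_m -> 'I_n.+1} | \sum_i (f i : nat) == n}.
Definition occ_of n (a : fockb n) : occ := [ffun i => (val a i : nat)].
Definition occfact (a : occ) : nat := (\prod_i (a i)`!)%N.

Definition op n := fockb n -> fockb n -> C.
Definition opmul n (X Y : op n) : op n := fun a c => \sum_b X a b * Y b c.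
Definition adj n (X : op n) : op n := fun a c => (X c a)^*.
Definition hs n (X Y : op n) : C := \sum_a \sum_c (X a c)^* * Y a c.
Definition ketbra n (x y : occ) : op n :=
  fun a c => ((occ_of a == x) && (occ_of c == y))%:R.

(* tau(g): a_i^dagger |-> sum_j g_{ji} a_j^dagger.  Matrix element
   <a|tau(g)|b> = sqrt(a! b!) sum_K prod_{i,j} g_{ji}^{K_ij} / K_ij!,
   K ranging over nonnegative integer m x m matrices with row sums b and column sums a
   (K_ij = number of the b_i photons of input mode i sent to output mode j).
   The same polynomial formula defines the holomorphic extension to all complex g. *)
Definition tau_el n (g : 'M[C]_m) (a b : occ) : C :=
  (Num.sqrt ((occfact a * occfact b)%N%:R : R))%:C *
  \sum_(K : {ffun 'I_m * 'I_m -> 'I_n.+1} |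
          [forall i, \sum_j (K (i, j) : nat) == b i] &&
          [forall j, \sum_i (K (i, j) : nat) == a j])
     \prod_(p : 'I_m * 'I_m) (g p.2 p.1 ^+ K p / ((K p)`!)%:R).
Definition tau n (g : 'M[C]_m) : op n := fun a c => tau_el n g (occ_of a) (occ_of c).

Definition omega n (g : 'M[C]_m) (X : op n) : op n := opmul (opmul (tau g) X) (adj (tau g)).
(* holomorphic extension X |-> tau(g) X tau(g^{-1}) (used for highest-weight vectors) *)
Definition omegaC n (g : 'M[C]_m) (X : op n) : op n := opmul (opmul (tau g) X) (tau (invmx g)).

Definition is_SU (g : 'M[C]_m) : Prop :=
  g *m (map_mx (fun z : C => z^*) g)^T = 1%:M /\ \det g = 1.

Definition lamk (k : nat) (i : nat) : nat :=
  if i == 0%N then (2 * k)%N else if i == m.-1 then 0%N else k.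

Definition upper_unitriangular (u : 'M[C]_m) : Prop :=
  (forall i, u i i = 1) /\ (forall i j : 'I_m, (j < i)%N -> u i j = 0).
Definition sl_diag (t : 'M[C]_m) : Prop :=
  (forall i j : 'I_m, i != j -> t i j = 0) /\ \det t = 1.

Definition hw_vector n k (X : op n) : Prop :=
  (forall u, upper_unitriangular u -> omegaC u X = X) /\
  (forall t, sl_diag t ->
     omegaC t X = fun a c => (\prod_(i < m) t i i ^+ lamk k i) * X a c).

Definition inspan n (S : op n -> Prop) (Y : op n) : Prop :=
  exists (r : nat) (c : 'I_r -> C) (v : 'I_r -> op n),
    (forall i, S (v i)) /\ Y = fun a d => \sum_i c i * v i a d.

(* the lambda_k isotypic component: span of the SU(m)-orbits of its highest-weight vectors *)
Definition Vk n k : op n -> Prop :=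
  inspan (fun Y => exists g X, is_SU g /\ hw_vector k X /\ Y = omega g X).

Definition lin_indep n r (v : 'I_r -> op n) : Prop :=
  forall c : 'I_r -> C, (fun a d => \sum_i c i * v i a d) = (fun _ _ => 0) ->
  forall i, c i = 0.
Definition dimV n (V : op n -> Prop) : nat :=
  (\max_(r < (#|{: fockb n}| ^ 2).+1 |
      `[< exists v : 'I_r -> op n, (forall i, V (v i)) /\ lin_indep v >]) r)%N.

Definition orth_proj n (V : op n -> Prop) (P : op n -> op n) : Prop :=
  forall X, V (P X) /\ (forall Y, V Y -> hs Y (fun a c => X a c - P X a c) = 0).

Definition normsq (al : 'I_m -> C) : R :=
  \sum_i ((complex.Re (al i)) ^+ 2 + (complex.Im (al i)) ^+ 2).
Definition coh (al : 'I_m -> C) (x : occ) : C :=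
  (expR (- normsq al / 2))%:C * (\prod_i al i ^+ x i) / (Num.sqrt ((occfact x)%:R : R))%:C.
Definition expect n (al : 'I_m -> C) (Y : op n) : C :=
  \sum_a \sum_c (coh al (occ_of a))^* * Y a c * coh al (occ_of c).
(* |alpha><alpha| compressed to H_n^m *)
Definition cohproj n (al : 'I_m -> C) : op n :=
  fun a c => coh al (occ_of a) * (coh al (occ_of c))^*.
Definition coh_tau n (al : 'I_m -> C) (g : 'M[C]_m) (x : occ) : C :=
  \sum_(a : fockb n) (coh al (occ_of a))^* * tau_el n g (occ_of a) x.

Fixpoint iint (k : nat) (F : (nat -> R) -> R) : R :=
  match k with
  | 0%N => F (fun _ => 0)
  | k'.+1 => Rintegral (@lebesgue_measure R) setT
               (fun x => iint k' (fun v => F (fun i => if i == k' then x else v i)))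
  end.
(* integral over C^m w.r.t. d^2 alpha = prod_i d Re(alpha_i) d Im(alpha_i) *)
Definition int_Cm (G : ('I_m -> C) -> R) : R :=
  iint (2 * m) (fun v => G (fun i => (v (2 * i)%N) +i* (v (2 * i).+1))).

(* heterodyne frame-operator eigenvalue s_{lambda_k} (integrand is real; we integrate its real part) *)
Definition s_lam n k (P : op n -> op n) : R :=
  ((dimV (@Vk n k))%:R)^-1 *
  int_Cm (fun al => complex.Re (expect al (P (cohproj al)))).

(* patterns with entries bounded by B; M_{i,j} (0-indexed, i <= j) *)
Definition gtp (B : nat) := {ffun 'I_m -> {ffun 'I_m -> 'I_B.+1}}.
Definition ent B (M : gtp B) (i j : nat) : nat :=
  match @insub nat (fun x => x < m)%N 'I_m i, @insub nat (fun x => x < m)%N 'I_m j with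
  | Some i', Some j' => M i' j'
  | _, _ => 0%N
  end.
(* M in GT(lam): top row lam, interlacing M_{i,j+1} >= M_{i,j} >= M_{i+1,j+1};
   entries below the diagonal (i > j) are set to 0 *)
Definition is_GT B (lam : nat -> nat) (M : gtp B) : bool :=
  [forall i : 'I_m, ent M i m.-1 == lam i] &&
  [forall i : 'I_m, forall j : 'I_m, (j < i)%N ==> (ent M i j == 0%N)] &&
  [forall i : 'I_m, forall j : 'I_m, ((i <= j)%N && (j.+1 < m)%N) ==>
      ((ent M i j <= ent M i j.+1)%N && (ent M i.+1 j.+1 <= ent M i j)%N)].
(* top row of tau_n^m: (n, 0, ..., 0) *)
Definition toprow (n : nat) (i : nat) : nat := if i == 0%N then n else 0%N.

Definition sM B (M : gtp B) (k : nat) : nat := (\sum_(j < k) \sum_(i < j.+1) ent M i j)%N.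
(* the same for the highest-weight pattern M_max (M_{i,j} = lam_i) *)
Definition sMmax (lam : nat -> nat) (k : nat) : nat := (\sum_(j < k) \sum_(i < j.+1) lam i)%N.
Definition phi B (lam : nat -> nat) (M : gtp B) : int := (sM M m.-1)%:Z - (sMmax lam m.-1)%:Z.
Definition sgn (z : int) : C := (-1) ^ z.

Definition N_of n (a : fockb n) : gtp n :=
  [ffun i : 'I_m => [ffun j : 'I_m => if (i : nat) == 0%N then inord (\sum_(l < m | (l <= j)%N) (val a l : nat))
                        else ord0]].
(* the occupation vector n' with |n'> = |N'> *)
Definition occ_of_gt B (N : gtp B) : occ :=
  [ffun j : 'I_m => (ent N 0 j - (if (j : nat) is j'.+1 then ent N 0 j' else 0))%N].

(* real Clebsch--Gordan coefficient C^M_{N1, bar N2} = <N1, bar N2 | M>, where the basis vector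
   |M> of lambda_k is realized as the operator bM in B(H_n^m) ~ H (x) bar H, and the Fock
   vector |N2> of bar tau equals (-1)^{phi(N2)} |bar N2>. *)
Definition CG n (bM : op n) (N1 N2 : gtp n) : C :=
  sgn (phi (toprow n) N2) * hs (ketbra (occ_of_gt N1) (occ_of_gt N2)) bM.

Definition GT_real_onb n k (b : gtp (2 * k) -> op n) : Prop :=
  (forall M, is_GT (lamk k) M -> @Vk n k (b M)) /\
  (forall M M', is_GT (lamk k) M -> is_GT (lamk k) M' -> hs (b M) (b M') = (M == M')%:R) /\
  (forall Y, @Vk n k Y -> exists c : gtp (2 * k) -> C,
       Y = fun a d => \sum_(M | is_GT (lamk k) M) c M * b M a d) /\
  (forall M a d, (b M a d)^* = b M a d).

Definition filter_fn n k (P : op n -> op n) (n0 : fockb n) (al : 'I_m -> C) (g : 'M[C]_m) : C :=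
  ((s_lam k P)^-1)%:C *
  expect al (omega g (P (ketbra (occ_of n0) (occ_of n0)))).

End Defs.

(* Main.v *)
Require Import Defs.
From mathcomp Require Import all_boot all_algebra.
From mathcomp Require Import all_classical all_reals all_analysis.
From mathcomp Require Import complex ring.
Import GRing.Theory Num.Theory.
Local Open Scope ring_scope.
Local Open Scope complex_scope.
Set Implicit Arguments. Unset Strict Implicit. Unset Printing Implicit Defensive.
Lemma hs_lin (R : realType) m n (A : op R m n) (I : finType) (P : pred I) (c : I -> R[i]) (B : I -> op R m n) :
  hs A (fun a d => \sum_(M | P M) c M * B M a d) = \sum_(M | P M) c M * hs A (B M).
Proof.
rewrite /hs.
under eq_bigr => a _ do under eq_bigr => d _ do rewrite mulr_sumr.
under eq_bigr => a _ do rewrite exchange_big /=.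
rewrite exchange_big /= ; apply: eq_bigr => M _.
rewrite mulr_sumr; apply: eq_bigr => a _; rewrite mulr_sumr; apply: eq_bigr => d _.
by rewrite mulrCA.
Qed.

Lemma hs_sub (R : realType) m n (A X Y : op R m n) :
  hs A (fun a c => X a c - Y a c) = hs A X - hs A Y.
Proof.
rewrite /hs -sumrB; apply: eq_bigr => a _; rewrite -sumrB; apply: eq_bigr => c _.
by rewrite mulrBr.
Qed.

Lemma onb_expand (R : realType) m n k (b : gtp m (2 * k) -> op R m n) (hb : GT_real_onb b)
   (X Y : op R m n) :
  Vk k Y -> (forall M, is_GT (lamk m k) M -> hs (b M) (fun a c => X a c - Y a c) = 0) ->
  Y = fun a d => \sum_(M | is_GT (lamk m k) M) hs (b M) X * b M a d.
Proof.
move=> VY hY; case: hb => _ [hon [hsp _]].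
have [c Yc] := hsp _ VY; subst Y.
apply: funext => a; apply: funext => d.
apply: eq_bigr => M HM; congr (_ * _).
have := hY M HM; rewrite hs_sub hs_lin => /eqP; rewrite subr_eq0 => /eqP ->.
rewrite (bigD1 M) //= hon // eqxx mulr1 big1 ?addr0 // => M' /andP [HM' ne].
by rewrite hon // eq_sym (negbTE ne) mulr0.
Qed.
Definition chi (R : realType) m (tv : 'I_m -> R[i]) (x : occ m) : R[i] := \prod_i tv i ^+ x i.
Definition dmat (R : realType) m (tv : 'I_m -> R[i]) : 'M[R[i]]_m := diag_mx (\row_i tv i).

Lemma tau_el_diag (R : realType) m n (tv : 'I_m -> R[i]) (g : 'M[R[i]]_m) (x y : occ m) :
  tau_el n (dmat tv *m g) x y = chi tv x * tau_el n g x y.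
Proof.
rewrite /tau_el mulrCA; congr (_ * _); rewrite mulr_sumr; apply: eq_bigr => K /andP [_ /forallP cs].
have -> : \prod_(p : 'I_m * 'I_m) ((dmat tv *m g) p.2 p.1 ^+ K p / ((K p)`!)%:R) =
   \prod_(p : 'I_m * 'I_m) (tv p.2 ^+ K p) * \prod_(p : 'I_m * 'I_m) (g p.2 p.1 ^+ K p / ((K p)`!)%:R).
  rewrite -big_split /=; apply: eq_bigr => p _.
  by rewrite /dmat mul_diag_mx !mxE exprMn mulrA.
congr (_ * _).
have -> : \prod_(p : 'I_m * 'I_m) tv p.2 ^+ K p = \prod_i \prod_j tv j ^+ K (i, j).
  by rewrite pair_bigA; apply: eq_bigr => -[i j].
rewrite exchange_big /=.
apply: eq_bigr => j _; rewrite prodrXr; congr (_ ^+ _).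
by apply/eqP; apply: cs.
Qed.
Definition Tt (R : realType) m n (tv : 'I_m -> R[i]) (Y : op R m n) : op R m n :=
  fun a c => chi tv (occ_of a) * (chi tv (occ_of c))^* * Y a c.

Lemma omega_T (R : realType) m n (tv : 'I_m -> R[i]) (g : 'M[R[i]]_m) (X : op R m n) :
  omega (dmat tv *m g) X = Tt tv (omega g X).
Proof.
apply: funext => a; apply: funext => c.
rewrite /omega /opmul /adj /tau /Tt !mulr_sumr; apply: eq_bigr => d _.
rewrite tau_el_diag rmorphM /=.
under eq_bigr => e _ do rewrite tau_el_diag -mulrA.
rewrite -mulr_sumr.
set s := \sum__ _; set u := chi _ _; set v := (chi _ _)^*%C; set w := (tau_el _ _ _ _)^*%C.
by rewrite !mulrA [u * s * v]mulrAC.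
Qed.
Lemma SU_T (R : realType) m (tv : 'I_m -> R[i]) (g : 'M[R[i]]_m) :
  (forall i, tv i * (tv i)^* = 1) -> \prod_i tv i = 1 -> is_SU g -> is_SU (dmat tv *m g).
Proof.
move=> hu hp [hg hd]; split; last by rewrite det_mulmx hd mulr1 /dmat det_diag; under eq_bigr do rewrite mxE.
have -> : map_mx (fun z : R[i] => z^*) (dmat tv *m g) = map_mx conjc (dmat tv) *m map_mx conjc g.
  exact: (map_mxM (conjc : {rmorphism R[i] -> R[i]})).
rewrite trmx_mul mulmxA -(mulmxA (dmat tv)) hg mulmx1 /dmat.
rewrite (map_diag_mx (conjc : {rmorphism R[i] -> R[i]})) tr_diag_mx mulmx_diag.
apply/matrixP => i j; rewrite !mxE.
by rewrite hu.
Qed.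
Lemma conjcE (R : rcfType) (x : R[i]) : conjc x = Num.conj x.
Proof. by []. Qed.

Lemma Vk_T (R : realType) m n k (tv : 'I_m -> R[i]) (Y : op R m n) :
  (forall i, tv i * Num.conj (tv i) = 1) -> \prod_i tv i = 1 -> Vk k Y -> Vk k (Tt tv Y).
Proof.
move=> hu hp [r [c [v [hv ->]]]].
exists r, c, (fun i => Tt tv (v i)); split.
  move=> i; have [g [X [hg [hX ->]]]] := hv i.
  by exists (dmat tv *m g), X; rewrite omega_T; split => //; apply: SU_T.
apply: funext => a; apply: funext => d; rewrite /Tt mulr_sumr; apply: eq_bigr => i _.
by rewrite mulrCA.
Qed.

Lemma chi_conj (R : realType) m (tv : 'I_m -> R[i]) x :
  chi (fun i => Num.conj (tv i)) x = Num.conj (chi tv x).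
Proof. by rewrite /chi rmorph_prod; apply: eq_bigr => i _; rewrite rmorphXn. Qed.

Lemma chi_unit (R : realType) m (tv : 'I_m -> R[i]) x :
  (forall i, tv i * Num.conj (tv i) = 1) -> chi tv x * Num.conj (chi tv x) = 1.
Proof.
move=> hu; rewrite -chi_conj /chi -big_split /=; apply: big1 => i _.
by rewrite -exprMn hu expr1n.
Qed.

Lemma hs_T (R : realType) m n (tv : 'I_m -> R[i]) (A Y : op R m n) :
  hs A (Tt tv Y) = hs (Tt (fun i => Num.conj (tv i)) A) Y.
Proof.
rewrite /hs /Tt; apply: eq_bigr => a _; apply: eq_bigr => c _.
rewrite !chi_conj !rmorphM /= !conjCK.
set x := Num.conj (A a c); set p := (chi _ _ * _). by rewrite mulrA (mulrC x).
Qed.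

Lemma T_sub (R : realType) m n (tv : 'I_m -> R[i]) (X Y : op R m n) :
  Tt tv (fun a c => X a c - Y a c) = fun a c => Tt tv X a c - Tt tv Y a c.
Proof. by apply: funext => a; apply: funext => c; rewrite /Tt mulrBr. Qed.

Lemma T_ketbra (R : realType) m n (tv : 'I_m -> R[i]) x :
  (forall i, tv i * Num.conj (tv i) = 1) -> Tt tv (@ketbra R m n x x) = @ketbra R m n x x.
Proof.
move=> hu; apply: funext => a; apply: funext => c; rewrite /Tt /ketbra.
case: andP => [[/eqP -> /eqP ->]|]; last by rewrite mulr0.
by rewrite chi_unit // mulr1.
Qed.
Lemma P_fixed (R : realType) m n k (P : op R m n -> op R m n) (hP : orth_proj (@Vk R m n k) P)
  (b : gtp m (2 * k) -> op R m n) (hb : GT_real_onb b) (tv : 'I_m -> R[i]) x :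
  (forall i, tv i * Num.conj (tv i) = 1) -> \prod_i tv i = 1 ->
  Tt tv (P (@ketbra R m n x x)) = P (@ketbra R m n x x).
Proof.
move=> hu hp.
set rho := @ketbra R m n x x.
have hbV : forall M, is_GT (lamk m k) M -> Vk k (b M) by case: hb.
have [VZ oZ] := hP rho.
have E1 := onb_expand hb VZ (fun M HM => oZ _ (hbV M HM)).
have hu' : forall i, Num.conj (tv i) * Num.conj (Num.conj (tv i)) = 1.
  by move=> i; rewrite conjCK mulrC.
have hp' : \prod_i Num.conj (tv i) = 1 by rewrite -rmorph_prod hp rmorph1.
have VW : Vk k (Tt tv (P rho)) by apply: Vk_T.
have E2 := onb_expand (X := rho) hb VW.
rewrite [in RHS]E1 E2 // => M HM.
have -> : (fun a c => rho a c - Tt tv (P rho) a c) = Tt tv (fun a c => rho a c - P rho a c).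
  by rewrite T_sub /rho T_ketbra.
rewrite hs_T.
apply: oZ; apply: Vk_T => //; exact: hbV.
Qed.
Lemma exists_z (R : realType) (d : nat) : (0 < d)%N ->
  exists z : R[i], z * Num.conj z = 1 /\ z ^+ d != 1.
Proof.
move=> d0; have d2 : (0 < d * 2)%N by rewrite muln_gt0 d0.
exists ((d * 2).-root (-1)); split.
  by rewrite -normCK norm_rootC normrN1 rootC1 // expr1n.
apply/eqP => h.
have := rootCK d2 (-1 : R[i]); rewrite exprM h expr1n => /eqP.
rewrite -subr_eq0 opprK -(natrD _ 1 1) pnatr_eq0 //.
Qed.
Lemma occ_of_inj (m n : nat) : injective (@occ_of m n).
Proof.
move=> a c h; apply: val_inj; apply/ffunP => i; apply: val_inj.
by have := congr1 (fun f : occ m => f i) h; rewrite !ffunE.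
Qed.

Lemma occ_sum (m n : nat) (a : fockb m n) : (\sum_i occ_of a i)%N = n.
Proof. by rewrite [RHS](esym (eqP (valP a))); apply: eq_bigr => i _; rewrite ffunE. Qed.

Lemma exists_gt (m n : nat) (a c : fockb m n) : a != c ->
  exists p, (occ_of c p < occ_of a p)%N.
Proof.
move=> ne; apply/existsP; apply: contraR ne; rewrite negb_exists => /forallP h.
have le : forall i, (occ_of a i <= occ_of c i)%N by move=> i; rewrite leqNgt h.
apply/eqP; apply: occ_of_inj; apply/ffunP => i.
have := sumnB (index_enum 'I_m) (P := predT) (fun i _ => le i).
rewrite !occ_sum subnn => /eqP; rewrite sum_nat_eq0 => /forallP /(_ i) /=.
by rewrite subn_eq0 => h2; apply/eqP; rewrite eqn_leq le h2.
Qed.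
Lemma pow_lemma (F : comRingType) (z w : F) cp aq u v : z * w = 1 ->
  z ^+ (cp + u) * w ^+ aq * (w ^+ cp * z ^+ (aq + v)) = z ^+ (u + v).
Proof.
move=> h.
have -> : z ^+ (cp + u) * w ^+ aq * (w ^+ cp * z ^+ (aq + v)) = (z * w) ^+ cp * (z * w) ^+ aq * z ^+ (u + v).
  rewrite !exprD !exprMn. ring.
by rewrite h !expr1n !mul1r.
Qed.

Lemma chi_pq (R : realType) m (p q : 'I_m) (z w : R[i]) (x : occ m) : p != q ->
  chi (fun i => if i == p then z else if i == q then w else 1) x = z ^+ x p * w ^+ x q.
Proof.
move=> npq; rewrite /chi (bigD1 p) //= eqxx (bigD1 q) //=; last by rewrite eq_sym.
rewrite eq_sym (negbTE npq) ?eqxx big1 ?mulr1 // => i /andP [ip iq].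
by rewrite (negbTE ip) (negbTE iq) expr1n.
Qed.

Lemma diag_zero (R : realType) m n k (P : op R m n -> op R m n) (hP : orth_proj (@Vk R m n k) P)
  (b : gtp m (2 * k) -> op R m n) (hb : GT_real_onb b) x (a c : fockb m n) :
  a != c -> P (@ketbra R m n x x) a c = 0.
Proof.
move=> ne.
have [p hp] := exists_gt ne.
have [q hq] : exists q, (occ_of a q < occ_of c q)%N by apply: exists_gt; rewrite eq_sym.
have npq : p != q by apply/eqP => e; subst q; move: (ltn_trans hp hq); rewrite ltnn.
set d := (occ_of a p - occ_of c p + (occ_of c q - occ_of a q))%N.
have d0 : (0 < d)%N by rewrite addn_gt0 subn_gt0 hp.
have [z [hz hzd]] := exists_z R d0.
set tv := fun i => if i == p then z else if i == q then Num.conj z else 1.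
have hu : forall i, tv i * Num.conj (tv i) = 1.
  move=> i; rewrite /tv; case: ifP => _ //; case: ifP => _; last by rewrite rmorph1 mulr1.
  by rewrite conjCK mulrC.
have hpr : \prod_i tv i = 1.
  rewrite (bigD1 p) //= /tv eqxx (bigD1 q) //=; last by rewrite eq_sym.
  rewrite eq_sym (negbTE npq) eqxx big1 ?mulr1 // => i /andP [ip iq].
  by rewrite (negbTE ip) (negbTE iq).
have fx := P_fixed hP hb x hu hpr.
have := congr1 (fun F => F a c) fx; rewrite /Tt /= => h.
apply/eqP; apply: contraLR hzd => nz; apply/negPn/eqP.
have h1 : chi tv (occ_of a) * Num.conj (chi tv (occ_of c)) = 1.
  by apply: (mulIf nz); rewrite h mul1r.
move: h1; rewrite /tv !chi_pq // rmorphM /= !rmorphXn /= conjCK.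
rewrite -(subnK (ltnW hp)) -(subnK (ltnW hq)) [(_ - _ + occ_of c p)%N]addnC [(_ - _ + occ_of a q)%N]addnC.
by rewrite pow_lemma.
Qed.
Lemma expect_diag (R : realType) m n (al : 'I_m -> R[i]) (g : 'M[R[i]]_m) (Z : op R m n) :
  (forall a c, a != c -> Z a c = 0) ->
  expect al (omega g Z) = \sum_b Z b b * `| coh_tau n al g (occ_of b) | ^+ 2.
Proof.
move=> hZ.
have om : forall a c, omega g Z a c =
    \sum_d tau_el n g (occ_of a) (occ_of d) * Z d d * Num.conj (tau_el n g (occ_of c) (occ_of d)).
  move=> a c; rewrite /omega /opmul /adj /tau; apply: eq_bigr => d _.
  rewrite ?conjcE; congr (_ * _).
  rewrite (bigD1 d) //= big1 ?addr0 // => e ne.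
  by rewrite hZ ?mulr0.
rewrite /expect.
under eq_bigr => a _ do under eq_bigr => c _ do rewrite om mulr_sumr mulr_suml.
under eq_bigr => a _ do rewrite exchange_big /=.
rewrite exchange_big /=; apply: eq_bigr => d _.
rewrite normCK /coh_tau rmorph_sum /= mulr_suml mulr_sumr.
apply: eq_bigr => a _; rewrite mulr_sumr mulr_sumr; apply: eq_bigr => c _.
rewrite ?conjcE.
set A := Num.conj (coh al (occ_of a)); set B := tau_el n g (occ_of a) (occ_of d).
set B2 := tau_el n g (occ_of c) (occ_of d).
set E := coh al (occ_of c); set z := Z d d.
change (A * (B * z * Num.conj B2) * E = z * (A * B * Num.conj (Num.conj E * B2))).
rewrite (rmorphM Num.conj (Num.conj E) B2) /= conjCK.
ring.
Qed.
Lemma sgn2 (R : realType) (z : int) : sgn R z * sgn R z = 1.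
Proof.
rewrite /sgn; case: z => p.
  by rewrite -exprMn mulrNN mulr1 expr1n.
by rewrite NegzE -invfM -exprMn mulrNN mulr1 expr1n invr1.
Qed.

Lemma sum_ketbra (R : realType) m n (x0 : fockb m n) (F : fockb m n -> fockb m n -> R[i] -> R[i]) :
  (forall a c, F a c 0 = 0) ->
  \sum_a \sum_c F a c (@ketbra R m n (occ_of x0) (occ_of x0) a c) = F x0 x0 1.
Proof.
move=> F0.
rewrite (bigD1 x0) //= [X in _ + X]big1 ?addr0 => [|a ne]; last first.
  apply: big1 => c _; rewrite /ketbra.
  by case: eqP => [/occ_of_inj e|]; [rewrite e eqxx in ne | rewrite F0].
rewrite (bigD1 x0) //= [X in _ + X]big1 ?addr0 => [|c ne]; last first.
  rewrite /ketbra eqxx /=.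
  by case: eqP => [/occ_of_inj e|]; [rewrite e eqxx in ne | rewrite F0].
by rewrite /ketbra eqxx.
Qed.

Lemma hs_ketbra_l (R : realType) m n (x0 : fockb m n) (B : op R m n) :
  hs (@ketbra R m n (occ_of x0) (occ_of x0)) B = B x0 x0.
Proof.
rewrite /hs (@sum_ketbra R m n x0 (fun a c v => Num.conj v * B a c)) ?rmorph1 ?mul1r //.
by move=> a c; rewrite rmorph0 mul0r.
Qed.

Lemma hs_ketbra_r (R : realType) m n (x0 : fockb m n) (B : op R m n) :
  hs B (@ketbra R m n (occ_of x0) (occ_of x0)) = Num.conj (B x0 x0).
Proof.
rewrite /hs (@sum_ketbra R m n x0 (fun a c v => Num.conj (B a c) * v)) ?mulr1 //.
by move=> a c; rewrite mulr0.
Qed.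
Lemma entE m B (M : gtp m B) (i j : nat) (hi : (i < m)%N) (hj : (j < m)%N) :
  ent M i j = M (Ordinal hi) (Ordinal hj).
Proof. by rewrite /ent (insubT (fun x => x < m)%N hi) (insubT (fun x => x < m)%N hj). Qed.

Lemma entE' m B (M : gtp m B) (i j : 'I_m) : ent M i j = M i j.
Proof. by rewrite (entE M (ltn_ord i) (ltn_ord j)); congr (nat_of_ord (M _ _)); apply: val_inj. Qed.

Lemma ent_outi m B (M : gtp m B) (i j : nat) : (m <= i)%N -> ent M i j = 0%N.
Proof. by move=> h; rewrite /ent insubN // -leqNgt. Qed.

Lemma ent_outj m B (M : gtp m B) (i j : nat) : (m <= j)%N -> ent M i j = 0%N.
Proof. by move=> h; rewrite /ent; case: insub => // ?; rewrite insubN // -leqNgt. Qed.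

Definition pre m (f : occ m) (j : nat) : nat := (\sum_(l < m | (l <= j)%N) f l)%N.

Lemma pre_mono m (f : occ m) j j' : (j <= j')%N -> (pre f j <= pre f j')%N.
Proof.
move=> h; rewrite /pre [X in (X <= _)%N]big_mkcond [X in (_ <= X)%N]big_mkcond /=.
apply: leq_sum => l _; case: ifP => // lj; by rewrite (leq_trans lj h).
Qed.

Lemma pre_full m (f : occ m) j : (m.-1 <= j)%N -> pre f j = (\sum_l f l)%N.
Proof.
move=> h; rewrite /pre; apply: eq_bigl => l; apply: (leq_trans _ h).
by rewrite -ltnS (ltn_predK (ltn_ord l)) ltn_ord.
Qed.

Lemma pre0 m (f : occ m) (h : (0 < m)%N) : pre f 0 = f (Ordinal h).
Proof.
rewrite /pre (big_pred1 (Ordinal h)) // => l /=; rewrite leqn0.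
by apply/eqP/eqP => [e|->//]; apply: val_inj.
Qed.

Lemma preS m (f : occ m) j (h : (j.+1 < m)%N) : pre f j.+1 = (pre f j + f (Ordinal h))%N.
Proof.
rewrite /pre (bigD1 (Ordinal h)) //= addnC; congr (_ + _)%N.
apply: eq_bigl => l; rewrite -val_eqE /= andbC -ltn_neqAle ltnS //.
Qed.
Lemma pre_le m n (a : fockb m n) j : (pre (occ_of a) j <= n)%N.
Proof.
apply: (leq_trans (pre_mono _ (leq_maxl j m.-1))).
by rewrite pre_full ?leq_maxr // occ_sum.
Qed.

Lemma N_of_ent m n (a : fockb m n) (i j : nat) :
  ent (N_of a) i j = if (i == 0%N) && (j < m)%N then pre (occ_of a) j else 0%N.
Proof.
case: (ltnP i m) => hi; last first.
  rewrite ent_outi //; case: eqP => // i0; subst i; case: ltnP => // hj.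
  by move: (leq_trans hj hi).
case: (ltnP j m) => hj; last by rewrite ent_outj // andbF.
rewrite andbT (entE _ hi hj) !ffunE /=.
case: eqP => // _.
have e : (\sum_(l < m | (l <= j)%N) (sval a l : nat))%N = pre (occ_of a) j.
  by apply: eq_bigr => l _; rewrite ffunE.
by rewrite inordK e // ltnS; exact: pre_le.
Qed.
Lemma N_of_GT m n (a : fockb m n) : is_GT (toprow n) (N_of a).
Proof.
apply/andP; split; first (apply/andP; split).
- apply/forallP => i; rewrite N_of_ent /toprow.
  have hm : (m.-1 < m)%N by rewrite (ltn_predK (ltn_ord i)).
  rewrite hm andbT; case: ifP => _ //.
  by rewrite pre_full // occ_sum.
- apply/forallP => i; apply/forallP => j; apply/implyP => ji.
  rewrite N_of_ent; case: ifP => // /andP [/eqP i0 _].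
  by move: ji; rewrite i0.
- apply/forallP => i; apply/forallP => j; apply/implyP => /andP [ij jm].
  rewrite !N_of_ent /= jm (ltnW jm) andbT.
  by case: ifP => _ //; rewrite pre_mono.
Qed.

Lemma occ_N_of m n (a : fockb m n) : occ_of_gt (N_of a) = occ_of a.
Proof.
apply/ffunP => j; rewrite ffunE !N_of_ent eqxx ltn_ord /=.
case: j => [[|j'] hj] /=.
  by rewrite pre0 subn0; congr (occ_of a _); apply: val_inj.
rewrite N_of_ent eqxx (ltn_trans (ltnSn j') hj) /= (preS _ hj).
by rewrite addnC addnK.
Qed.
Lemma GT_parts m B lam (M : gtp m B) : is_GT lam M ->
  [/\ (forall i : 'I_m, ent M i m.-1 = lam i),
      (forall i j : nat, (i < m)%N -> (j < i)%N -> ent M i j = 0%N) &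
      (forall i j : nat, (i <= j)%N -> (j.+1 < m)%N -> (ent M i j <= ent M i j.+1)%N)].
Proof.
move=> /andP [/andP [/forallP h1 /forallP h2] /forallP h3]; split.
- by move=> i; apply/eqP; apply: h1.
- move=> i j hi ji; have hj : (j < m)%N by apply: ltn_trans hi.
  by have /forallP /(_ (Ordinal hj)) := h2 (Ordinal hi); rewrite /= ji => /eqP.
- move=> i j ij jm; have hj : (j < m)%N by apply: ltn_trans jm.
  have hi : (i < m)%N by apply: leq_ltn_trans hj.
  by have /forallP /(_ (Ordinal hj)) := h3 (Ordinal hi); rewrite /= ij jm => /andP [].
Qed.

Lemma GT_mono m B lam (M : gtp m B) (hM : is_GT lam M) i j j' :
  (i <= j)%N -> (j <= j')%N -> (j' < m)%N -> (ent M i j <= ent M i j')%N.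
Proof.
have [_ _ h3] := GT_parts hM.
move=> ij; elim: j' => [|j' IH] jj' hj'.
  by rewrite leqn0 in jj'; rewrite (eqP jj').
rewrite leq_eqVlt ltnS in jj'; case/orP: jj' => [/eqP -> //| jj'].
apply: (leq_trans (IH jj' (ltnW hj'))).
by apply: h3 => //; apply: leq_trans jj'.
Qed.

Lemma GT_top m n (N : gtp m n) (hN : is_GT (toprow n) N) i j :
  i != 0%N -> ent N i j = 0%N.
Proof.
have [h1 h2 _] := GT_parts hN.
move=> i0; case: (ltnP i m) => hi; last by rewrite ent_outi.
case: (ltnP j m) => hj; last by rewrite ent_outj.
case: (ltnP j i) => ji; first by apply: h2.
have hm : (m.-1 < m)%N by rewrite (ltn_predK hi).
apply/eqP; rewrite -leqn0.
have := GT_mono hN ji (j':=m.-1) _ hm; rewrite -ltnS (ltn_predK hi) => /(_ hj).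
by have := h1 (Ordinal hi); rewrite /= /toprow (negbTE i0) => ->.
Qed.

Lemma GT_le m n (N : gtp m n) (hN : is_GT (toprow n) N) j : (ent N 0 j <= n)%N.
Proof.
have [h1 _ _] := GT_parts hN.
case: (ltnP j m) => hj; last by rewrite ent_outj.
have hm0 : (0 < m)%N by apply: leq_ltn_trans hj.
have hm : (m.-1 < m)%N by rewrite (ltn_predK hm0).
have := GT_mono hN (leq0n j) (j':=m.-1) _ hm; rewrite -ltnS (ltn_predK hm0) => /(_ hj).
by have := h1 (Ordinal hm0); rewrite /= /toprow => ->.
Qed.
Lemma pre_gt m n (N : gtp m n) (hN : is_GT (toprow n) N) j :
  (j < m)%N -> pre (occ_of_gt N) j = ent N 0 j.
Proof.
elim: j => [|j IH] hj.
  by rewrite (pre0 _ hj) ffunE subn0.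
rewrite (preS _ hj) IH ?(ltn_trans (ltnSn j) hj) // ffunE /=.
by rewrite subnKC // (GT_mono hN).
Qed.

Lemma sum_occ_gt m n (N : gtp m n) (hN : is_GT (toprow n) N) (hm : (0 < m)%N) :
  (\sum_j occ_of_gt N j)%N = n.
Proof.
have hm' : (m.-1 < m)%N by rewrite (ltn_predK hm).
rewrite -(pre_full _ (leqnn m.-1)) pre_gt //.
have [h1 _ _] := GT_parts hN.
by have := h1 (Ordinal hm); rewrite /= /toprow.
Qed.

Lemma occ_gt_le m n (N : gtp m n) (hN : is_GT (toprow n) N) j : (occ_of_gt N j <= n)%N.
Proof. by rewrite ffunE (leq_trans (leq_subr _ _)) // GT_le. Qed.

Definition fockb_of m n (n0 : fockb m n) (N : gtp m n) : fockb m n :=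
  insubd n0 [ffun j => (inord (occ_of_gt N j) : 'I_n.+1)].

Lemma occ_fockb_of m n (n0 : fockb m n) (N : gtp m n) (hN : is_GT (toprow n) N) (hm : (0 < m)%N) :
  occ_of (fockb_of n0 N) = occ_of_gt N.
Proof.
have e : forall j, ([ffun j => (inord (occ_of_gt N j) : 'I_n.+1)] j : nat) = occ_of_gt N j.
  by move=> j; rewrite ffunE inordK // ltnS occ_gt_le.
have P : (\sum_i ([ffun j => (inord (occ_of_gt N j) : 'I_n.+1)] i : nat) == n)%N.
  by under eq_bigr do rewrite e; rewrite sum_occ_gt.
apply/ffunP => j; rewrite ffunE /fockb_of val_insubd P.
exact: e.
Qed.

Lemma N_of_fockb m n (n0 : fockb m n) (N : gtp m n) (hN : is_GT (toprow n) N) (hm : (0 < m)%N) :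
  N_of (fockb_of n0 N) = N.
Proof.
apply/ffunP => i; apply/ffunP => j; apply: val_inj => /=.
rewrite -!entE' N_of_ent ltn_ord andbT occ_fockb_of //.
case: ifP => [/eqP -> | /negbT i0]; first by rewrite pre_gt.
by rewrite GT_top.
Qed.

Lemma GT_reindex (R : realType) m n (n0 : fockb m n) (hm : (0 < m)%N) (F : gtp m n -> R[i]) :
  \sum_(N : gtp m n | is_GT (toprow n) N) F N = \sum_(b : fockb m n) F (N_of b).
Proof.
rewrite (reindex_onto (@N_of m n) (fockb_of n0)) /=; last by move=> N hN; apply: N_of_fockb.
apply: eq_bigl => b; rewrite N_of_GT /=.
apply/eqP; apply: occ_of_inj.
by rewrite occ_fockb_of ?N_of_GT // occ_N_of.
Qed.
Theorem mainTheorem13 (R : realType) (m n k : nat) (hm : (2 <= m)%N) (hk : (k <= n)%N)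
  (n0 : fockb m n)
  (P : op R m n -> op R m n) (hP : orth_proj (@Vk R m n k) P)
  (b : gtp m (2 * k) -> op R m n) (hb : GT_real_onb b)
  (hs0 : s_lam k P != 0)
  (al : 'I_m -> R[i]) (g : 'M[R[i]]_m) (hg : is_SU g) :
  filter_fn k P n0 al g =
  ((s_lam k P)^-1)%:C * sgn R (phi (toprow n) (N_of n0)) *
  \sum_(M | is_GT (lamk m k) M)
     CG (b M) (N_of n0) (N_of n0) *
     \sum_(N' : gtp m n | is_GT (toprow n) N')
        sgn R (phi (toprow n) N') * CG (b M) N' N' *
        `| coh_tau n al g (occ_of_gt N') | ^+ 2.
Proof.
have hm0 : (0 < m)%N by apply: leq_trans hm.
have hreal : forall M a d, Num.conj (b M a d) = b M a d.
  by case: hb => _ [_ [_ h]] M a d; rewrite -conjcE h.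
set rho := @ketbra R m n (occ_of n0) (occ_of n0).
have hbV : forall M, is_GT (lamk m k) M -> Vk k (b M) by case: hb.
have [VZ oZ] := hP rho.
have E1 := onb_expand hb VZ (fun M HM => oZ _ (hbV M HM)).
have hr : forall M, hs (b M) rho = b M n0 n0 by move=> M; rewrite /rho hs_ketbra_r hreal.
rewrite /filter_fn -mulrA; congr (_ * _).
rewrite expect_diag; last by move=> a c ne; apply: (diag_zero hP hb).
rewrite mulr_sumr.
under [RHS]eq_bigr => M HM.
  rewrite (GT_reindex n0 hm0).
  under eq_bigr => c _ do rewrite /CG occ_N_of hs_ketbra_l mulrA sgn2 mul1r.
  rewrite /CG occ_N_of hs_ketbra_l !mulrA sgn2 mul1r.
  over.
rewrite /=.
under eq_bigr => c _ do rewrite E1 /= mulr_suml.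
under eq_bigr => c _ do under eq_bigr => M _ do rewrite hr.
rewrite exchange_big /=; apply: eq_bigr => M _.
by rewrite mulr_sumr; apply: eq_bigr => c _; rewrite mulrA.
Qed.
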